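(* Let $D$ be an integral domain with quotient field $K$ and $n\ge1$. Let $$\mathrm{Int}_K(M_n(D))=\{f\in K[x]\mid f(C)\in M_n(D)\ \forall C\in M_n(D)\},$$ $$\mathrm{Int}_K[M_n(D)]=\{f\in (M_n(K))[x]\mid f(C)\in M_n(D)\ \forall C\in M_n(D)\}.$$ Identify $(M_n(K))[x]$ with $M_n(K[x])$ via the ring isomorphism $\varphi\big(\sum_k (a^{(k)}_{ij})_{i,j}\,x^k\big)=\big(\sum_k a^{(k)}_{ij}x^k\big)_{i,j}$. Then $\varphi(\mathrm{Int}_K[M_n(D)])=M_n(\mathrm{Int}_K(M_n(D)))$.
   Context: For $f=\sum_k A_k x^k\in (M_n(K))[x]$ and $C\in M_n(D)$, $f(C)=\sum_k A_kC^k$ (coefficients written on the left). $\mathrm{Int}_K[M_n(D)]$ is a ring (closed under multiplication) lying between $(M_n(D))[x]$ and $(M_n(K))[x]$. *)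

(* Defs.v *)
From HB Require Import structures.
From mathcomp Require Import all_boot all_order all_algebra.
Set Implicit Arguments. Unset Strict Implicit. Unset Printing Implicit Defensive.
Import GRing.Theory.
Local Open Scope ring_scope.

(* D : integral domain, K := {fraction D} its quotient field, D embedded via tofrac.
   Matrices are n x n with n = m.+1 (so n >= 1). *)

Definition inMD (D : idomainType) (m : nat) (C : 'M[{fraction D}]_m.+1) : Prop :=
  exists B : 'M[D]_m.+1, C = map_mx (@tofrac D) B.

Definition evalK (D : idomainType) (m : nat) (f : {poly {fraction D}})
  (C : 'M[{fraction D}]_m.+1) : 'M[{fraction D}]_m.+1 :=
  \sum_(k < size f) (f`_k)%:M * C ^+ k.

Definition evalMK (D : idomainType) (m : nat) (f : {poly 'M[{fraction D}]_m.+1})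
  (C : 'M[{fraction D}]_m.+1) : 'M[{fraction D}]_m.+1 :=
  \sum_(k < size f) f`_k * C ^+ k.

Definition IntK (D : idomainType) (m : nat) (f : {poly {fraction D}}) : Prop :=
  forall C : 'M[D]_m.+1, inMD (evalK f (map_mx (@tofrac D) C)).

Definition IntKM (D : idomainType) (m : nat) (f : {poly 'M[{fraction D}]_m.+1}) : Prop :=
  forall C : 'M[D]_m.+1, inMD (evalMK f (map_mx (@tofrac D) C)).

Definition phi (D : idomainType) (m : nat) (f : {poly 'M[{fraction D}]_m.+1})
  : 'M[{poly {fraction D}}]_m.+1 :=
  \matrix_(i, j) \poly_(k < size f) (f`_k i j).

(* Main.v *)
Require Import Defs.
From HB Require Import structures.
From mathcomp Require Import all_boot all_order all_algebra.
From mathcomp Require Import zify.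
Set Implicit Arguments. Unset Strict Implicit. Unset Printing Implicit Defensive.
Import GRing.Theory.
Local Open Scope ring_scope.

Lemma zm (V : zmodType) (a b c x : V) : x = (a - b + c) - (a - b + (c - x)).
Proof. by rewrite [a - b + (c - x)]addrA opprB [RHS]addrC subrK. Qed.

Section S.
Variables (D : idomainType) (m : nat).
Local Notation K := {fraction D}.
Local Notation MK := 'M[K]_m.+1.
Local Notation fm := (map_mx (@tofrac D)).

Lemma inMD_map (B : 'M[D]_m.+1) : inMD (fm B).
Proof. by exists B. Qed.

Lemma inMD_add (X Y : MK) : inMD X -> inMD Y -> inMD (X + Y).
Proof. by move=> [A ->] [B ->]; exists (A + B); rewrite map_mxD. Qed.

Lemma inMD_opp (X : MK) : inMD X -> inMD (- X).
Proof. by move=> [A ->]; exists (- A); rewrite map_mxN. Qed.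

Lemma inMD_sub (X Y : MK) : inMD X -> inMD Y -> inMD (X - Y).
Proof. by move=> hX hY; apply: inMD_add => //; apply: inMD_opp. Qed.

Lemma inMD_mul (X Y : MK) : inMD X -> inMD Y -> inMD (X * Y).
Proof. by move=> [A ->] [B ->]; exists (A * B); rewrite -!mulmxE map_mxM. Qed.

Lemma inMD0 : inMD (0 : MK).
Proof. by exists 0; rewrite map_mx0. Qed.

Lemma inMD_delta i j : inMD (delta_mx i j : MK).
Proof. by exists (delta_mx i j); rewrite map_delta_mx. Qed.

Lemma inMD_sum (I : finType) (F : I -> MK) : (forall i, inMD (F i)) -> inMD (\sum_i F i).
Proof. by move=> h; apply: (big_ind (@inMD D m)) => //; [apply: inMD0 | apply: inMD_add]. Qed.

Lemma pad (R : nmodType) (s : nat -> R) (N n : nat) : (n <= N)%N ->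
  (forall k, (n <= k)%N -> s k = 0) -> \sum_(k < n) s k = \sum_(k < N) s k.
Proof.
move=> hn hs; rewrite (big_ord_widen _ _ hn) big_mkcond /=.
by apply: eq_bigr => k _; case: ltnP => // h; rewrite hs.
Qed.

Lemma evalK_pad (g : {poly K}) (X : MK) N : (size g <= N)%N ->
  evalK g X = \sum_(k < N) (g`_k)%:M * X ^+ k.
Proof.
move=> h; rewrite /evalK (@pad _ (fun k => (g`_k)%:M * X ^+ k) _ _ h) // => k hk.
by rewrite nth_default // -mulmxE mul_scalar_mx scale0r.
Qed.

Lemma evalMK_pad (f : {poly MK}) (X : MK) N : (size f <= N)%N ->
  evalMK f X = \sum_(k < N) f`_k * X ^+ k.
Proof.
move=> h; rewrite /evalMK (@pad _ (fun k => f`_k * X ^+ k) _ _ h) // => k hk.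
by rewrite nth_default // mul0r.
Qed.

Lemma phi_coef (f : {poly MK}) i j k : (phi f i j)`_k = f`_k i j.
Proof.
rewrite mxE coef_poly; case: ltnP => // h.
by rewrite nth_default // mxE.
Qed.

Lemma size_phi (f : {poly MK}) i j : (size (phi f i j) <= size f)%N.
Proof. by rewrite mxE size_poly. Qed.

Lemma eval_decomp (f : {poly MK}) (X : MK) :
  evalMK f X = \sum_a \sum_b delta_mx a b * evalK (phi f a b) X.
Proof.
rewrite (evalMK_pad X (leqnn _)).
transitivity (\sum_(k < size f) \sum_a \sum_b
   delta_mx a b * (((phi f a b)`_k)%:M * X ^+ k)).
  apply: eq_bigr => k _.
  rewrite [f`_k in LHS]matrix_sum_delta mulr_suml.
  apply: eq_bigr => b _; rewrite mulr_suml; apply: eq_bigr => c _.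
  by rewrite phi_coef -mulmxE mul_scalar_mx mulmxE -scalerAr scalerAl.
rewrite exchange_big /=; apply: eq_bigr => a _.
rewrite exchange_big /=; apply: eq_bigr => b _.
by rewrite (evalK_pad X (size_phi f a b)) mulr_sumr.
Qed.


Lemma conjX (A B X : MK) k : A * B = 1 -> B * A = 1 ->
  (A * X * B) ^+ k = A * X ^+ k * B.
Proof.
move=> hAB hBA; elim: k => [|k IH]; first by rewrite !expr0 mulr1.
by rewrite exprS IH !mulrA -[A * X * B * A]mulrA hBA mulr1 -[A * X * X ^+ k]mulrA -exprS.
Qed.

Lemma evalK_conj (g : {poly K}) (A B X : MK) : A * B = 1 -> B * A = 1 ->
  evalK g (A * X * B) = A * evalK g X * B.
Proof.
move=> hAB hBA; rewrite /evalK mulr_sumr mulr_suml; apply: eq_bigr => k _.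
rewrite conjX // !mulrA; congr (_ * _ * _).
by rewrite -!mulmxE scalar_mxC.
Qed.

Definition T (f : {poly MK}) p (C : 'M[D]_m.+1) r (A : MK) :=
  \sum_b delta_mx r b * A * evalK (phi f p b) (fm C).

Lemma T_inv f p C r (A B : 'M[D]_m.+1) : IntKM f -> A * B = 1 -> B * A = 1 ->
  inMD (T f p C r (fm A)).
Proof.
move=> hf hAB hBA.
have hAB' : fm A * fm B = 1 by rewrite -mulmxE -map_mxM mulmxE hAB map_mx1.
have hBA' : fm B * fm A = 1 by rewrite -mulmxE -map_mxM mulmxE hBA map_mx1.
have := inMD_mul (inMD_mul (inMD_delta r p) (hf (A * C * B))) (inMD_map A).
congr inMD.
have eX : fm (A * C * B) = fm A * fm C * fm B by rewrite -!mulmxE !map_mxM.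
rewrite eX eval_decomp /T mulr_sumr. rewrite (@mulr_suml _ _ _ _ _ (fm A)).
rewrite [LHS](bigD1 p) //= [X in _ + X]big1 ?addr0; last first.
  move=> a hap; rewrite mulr_sumr (@mulr_suml _ _ _ _ _ (fm A)) big1 // => b _.
  by rewrite mulrA -mulmxE mul_delta_mx_cond eq_sym (negbTE hap) mulr0n !mul0mx.
rewrite mulr_sumr (@mulr_suml _ _ _ _ _ (fm A)); apply: eq_bigr => b _.
rewrite mulrA -mulmxE mul_delta_mx_cond eqxx mulr1n.
by rewrite !mulmxE evalK_conj // !mulrA -[_ * fm B * fm A]mulrA hBA' mulr1.
Qed.

Lemma T_sub f p C r (A1 A2 : MK) : T f p C r (A1 - A2) = T f p C r A1 - T f p C r A2.
Proof. by rewrite /T -sumrB; apply: eq_bigr => b _; rewrite mulrBr mulrBl. Qed.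

Lemma T_add f p C r (A1 A2 : MK) : T f p C r (A1 + A2) = T f p C r A1 + T f p C r A2.
Proof. by rewrite /T -big_split; apply: eq_bigr => b _; rewrite mulrDr mulrDl. Qed.

Lemma T_delta f p C r l s :
  T f p C r (delta_mx l s) = delta_mx r s * evalK (phi f p l) (fm C).
Proof.
rewrite /T (bigD1 l) //= big1 ?addr0.
  by rewrite -mulmxE mul_delta_mx_cond eqxx mulr1n.
by move=> b hb; rewrite -mulmxE mul_delta_mx_cond (negbTE hb) mulr0n !mul0mx.
Qed.

Lemma EE0 i j : i != j -> (delta_mx i j : 'M[D]_m.+1) * delta_mx i j = 0.
Proof. by move=> h; rewrite -mulmxE mul_delta_mx_cond eq_sym (negbTE h) mulr0n. Qed.

Lemma tv1 i j : i != j -> (1 + delta_mx i j : 'M[D]_m.+1) * (1 - delta_mx i j) = 1.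
Proof. by move=> h; rewrite mulrBr mulr1 mulrDl mul1r EE0 // addr0 addrK. Qed.

Lemma tv2 i j : i != j -> (1 - delta_mx i j : 'M[D]_m.+1) * (1 + delta_mx i j) = 1.
Proof. by move=> h; rewrite mulrDr mulr1 mulrBl mul1r EE0 // subr0 subrK. Qed.



Lemma T_all f p C r l s : IntKM f -> inMD (T f p C r (delta_mx l s)).
Proof.
move=> hf.
have T1 := T_inv p C r hf (mulr1 (1 : 'M[D]_m.+1)) (mulr1 (1 : 'M[D]_m.+1)).
have TV i j : i != j -> inMD (T f p C r (delta_mx i j)).
  move=> hij.
  have e : (delta_mx i j : MK) = fm (1 + delta_mx i j) - fm 1.
    by rewrite map_mxD map_delta_mx addrAC subrr add0r.
  rewrite e T_sub; apply: inMD_sub => //.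
  by have := T_inv p C r hf (tv1 hij) (tv2 hij).
have [hsl|hsl] := eqVneq s l; last by apply: TV; rewrite eq_sym.
subst s.
have [m0|mpos] := eqVneq m 0%N.
  have ee (a b : 'I_m.+1) : a = b.
    apply/val_inj; have ha := ltn_ord a; have hb := ltn_ord b.
    move/eqP: m0 => m0; simpl; lia.
  suff -> : (delta_mx l l : MK) = fm 1 by [].
  apply/matrixP => i j; rewrite !mxE (ee i l) (ee j l) !eqxx /=.
  by rewrite rmorph1.
pose t : 'I_m.+1 := if l == ord0 then ord_max else ord0.
have htl : t != l.
  rewrite /t; case: (eqVneq l ord0) => [->|hl]; last by rewrite eq_sym.
  by rewrite -val_eqE /=.
have hlt : l != t by rewrite eq_sym.
pose A : 'M[D]_m.+1 := (1 - delta_mx l t) * (1 + delta_mx t l).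
pose B : 'M[D]_m.+1 := (1 - delta_mx t l) * (1 + delta_mx l t).
have hAB : A * B = 1.
  by rewrite /A /B -!mulrA (mulrA (1 + delta_mx t l)) tv1 // mul1r tv2.
have hBA : B * A = 1.
  by rewrite /A /B -!mulrA (mulrA (1 + delta_mx l t)) tv1 // mul1r tv2.
have eA : fm A = fm 1 - delta_mx l t + (delta_mx t l - delta_mx l l).
  rewrite /A mulrDr mulr1 mulrBl mul1r.
  have -> : delta_mx l t * delta_mx t l = delta_mx l l :> 'M[D]_m.+1.
    by rewrite -mulmxE mul_delta_mx_cond eqxx mulr1n.
  by rewrite !map_mxD !map_mxN !map_delta_mx.
have := T_inv p C r hf hAB hBA; rewrite eA T_add T_sub T_sub => hT.
set X := T f p C r (delta_mx l l) in hT *.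
have -> : X = (T f p C r (fm 1) - T f p C r (delta_mx l t) + T f p C r (delta_mx t l))
   - (T f p C r (fm 1) - T f p C r (delta_mx l t) + (T f p C r (delta_mx t l) - X)).
  exact: zm.
apply: inMD_sub => //; apply: inMD_add; [apply: inMD_sub => // |]; exact: TV.
Qed.

End S.

Theorem mainTheorem7 (D : idomainType) (m : nat)
  (M : 'M[{poly {fraction D}}]_m.+1) :
  (exists f : {poly 'M[{fraction D}]_m.+1}, IntKM f /\ phi f = M) <->
  (forall i j, IntK m (M i j)).
Proof.
split.
  move=> [f [hf <-]] i j C.
  set G := evalK (phi f i j) (map_mx (@tofrac D) C).
  have -> : G = \sum_s delta_mx s s * G.
    by rewrite -(@mulr_suml _ _ _ _ _ G) -mx1_sum_delta mul1r.
  apply: inMD_sum => s.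
  by rewrite -T_delta; apply: T_all.
move=> h.
pose N := (\max_i \max_j size (M i j))%N.
have hN i j : (size (M i j) <= N)%N.
  rewrite /N; have h1 := @leq_bigmax _ (fun j => size (M i j)) j.
  have h2 := @leq_bigmax _ (fun i => \max_j size (M i j)) i.
  exact: leq_trans h1 h2.
pose f : {poly 'M[{fraction D}]_m.+1} := \poly_(k < N) \matrix_(i, j) (M i j)`_k.
have hphi : phi f = M.
  apply/matrixP => i j; apply/polyP => k; rewrite phi_coef coef_poly.
  case: ltnP => hk; first by rewrite mxE.
  by rewrite nth_default ?mxE // (leq_trans (hN i j) hk).
exists f; split => //.
move=> C; rewrite eval_decomp hphi.
apply: inMD_sum => a; apply: inMD_sum => b.
by apply: inMD_mul; [apply: inMD_delta | apply: h].
Qed.
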